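(* Let $G$ be a graph, $S\subseteq V(G)$, $k$ an integer, and let $\mathcal{C}$ be the set of all inclusion-wise maximal chips. Any chip $C \in \mathcal{C}$ touches at most $3k \cdot 4^{3k}$ other chips of $\mathcal{C}$.
   Context: $N(C)$ is the set of vertices outside $C$ with a neighbour in $C$. For $X,Y\subseteq V(G)$, a set $W$ is an $X-Y$ separator if no connected component of $G\setminus W$ contains both a vertex of $X$ and a vertex of $Y$. $R_H(Z)$ denotes the set of vertices reachable from $Z$ in $H$. An inclusion-wise minimal $X-Y$ separator $W$ is an important $X-Y$ separator if there is no $X-Y$ separator $W'$ with $|W'|\le|W|$ and $R_{G\setminus W}(X\setminus W)\subsetneq R_{G\setminus W'}(X\setminus W')$. For fixed $S$ and $k$, a set $C\subseteq V(G)$ is a chip if $G[C]$ is connected, $|N(C)|\le 3k$, and $N(C)$ is an important $C-S$ separator. Two distinct chips $C_1,C_2\in\mathcal{C}$ touch if $C_1\cap C_2\neq\emptyset$ or there is an edge with one endpoint in $C_1$ and the other in $C_2$. *)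

(* Defs.v *)
(* finite simple graphs as symmetric irreflexive relations on a finType. *)
From mathcomp Require Import all_boot.
Set Implicit Arguments. Unset Strict Implicit. Unset Printing Implicit Defensive.

Section Chips.
Variable T : finType.
Variable e : rel T.

Definition avoid (W : {set T}) : rel T := fun x y => [&& e x y, x \notin W & y \notin W].

Definition induced (C : {set T}) : rel T := fun x y => [&& e x y, x \in C & y \in C].

Definition nbh (C : {set T}) : {set T} :=
  [set y | (y \notin C) && [exists x in C, e x y]].

Definition reach (W X : {set T}) : {set T} :=
  [set y | (y \notin W) && [exists x in X :\: W, connect (avoid W) x y]].

Definition separator (X Y W : {set T}) : bool :=
  [forall x in X :\: W, forall y in Y :\: W, ~~ connect (avoid W) x y].

Definition minimal_separator (X Y W : {set T}) : bool :=
  separator X Y W && [forall W' : {set T}, (W' \proper W) ==> ~~ separator X Y W'].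

Definition important_separator (X Y W : {set T}) : bool :=
  minimal_separator X Y W &&
  [forall W' : {set T}, (separator X Y W' && (#|W'| <= #|W|))
                        ==> ~~ (reach W X \proper reach W' X)].

Definition connected_set (C : {set T}) : bool :=
  (C != set0) && [forall x in C, forall y in C, connect (induced C) x y].

Definition chip (S : {set T}) (k : nat) (C : {set T}) : bool :=
  [&& connected_set C, #|nbh C| <= 3 * k & important_separator C S (nbh C)].

Definition max_chip (S : {set T}) (k : nat) (C : {set T}) : bool :=
  chip S k C && [forall D : {set T}, (chip S k D && (C \subset D)) ==> (D == C)].

Definition touch (C1 C2 : {set T}) : bool :=
  (C1 != C2) &&
  ([exists x in C1, x \in C2] || [exists x in C1, exists y in C2, e x y]).

End Chips.

(* Main.v *)
Require Import Defs.
From mathcomp Require Import all_boot zify.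
Set Implicit Arguments. Unset Strict Implicit. Unset Printing Implicit Defensive.

Lemma ar1 l a b c d : l <= a -> a <= c -> b + c <= d + l -> b <= d. Proof. lia. Qed.
Lemma ar2 l K : 1 <= l -> l <= K -> 2 * K <= 0 + l -> False. Proof. lia. Qed.
Lemma ar3 l a K m : l < a -> 2 * K <= m.+1 + l -> 2 * K <= m + a. Proof. lia. Qed.
Lemma ar4 a b K m : 2 * K <= m.+1 + a -> a <= b.+1 -> 2 * K.-1 <= m + b. Proof. lia. Qed.
Lemma ar5 a b K : a <= K -> a = b.+1 -> b <= K.-1. Proof. lia. Qed.
Lemma ar6 a b c d : a < c -> c <= d.+1 -> a = b.+1 -> b < d. Proof. lia. Qed.

Section Gen.
Variables (T : finType) (e : rel T).

Lemma exit_edge (r : rel T) (P : pred T) x y :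
  connect r x y -> P x -> ~~ P y -> exists a b, [/\ r a b, P a & ~~ P b].
Proof.
move/connectP=> [p pth ->] {y}; elim: p x pth => [|z p IH] x /=; first by move=> _ ->.
move=> /andP[rxz pth] Px Pl; case Pz: (P z); first exact: IH pth Pz Pl.
by exists x, z; rewrite Pz.
Qed.

Lemma conn_in (D : {set T}) x y : connect (induced e D) x y -> x \in D -> y \in D.
Proof.
move=> c xD; apply/negPn/negP=> yD.
have [a [b [/and3P[_ _ bD] _ /negP]]] := exit_edge (P := [pred z | z \in D]) c xD yD.
by [].
Qed.

Lemma conn_mono (D D' : {set T}) x y : D \subset D' ->
  connect (induced e D) x y -> connect (induced e D') x y.
Proof.
move=> sDD'; apply: connect_sub => a b /and3P[eab aD bD]; apply: connect1.
by rewrite /induced eab !(subsetP sDD').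
Qed.

Lemma memnb w (A : {set T}) : reflect (w \notin A /\ exists2 x, x \in A & e x w) (w \in nbh e A).
Proof.
rewrite /nbh inE; apply: (iffP andP) => [[wA /existsP[x /andP[xA exw]]]|[wA [x xA exw]]].
  by split=> //; exists x.
by split=> //; apply/existsP; exists x; rewrite xA.
Qed.

Lemma nbh_out w (A : {set T}) : w \in nbh e A -> w \notin A.
Proof. by case/memnb. Qed.

Lemma closure_avoid (A : {set T}) x y : connect (avoid e (nbh e A)) x y -> x \in A -> y \in A.
Proof.
move=> c xA; apply/negPn/negP=> yA.
have [a [b [/and3P[eab _ bN] aA bA]]] := exit_edge (P := [pred z | z \in A]) c xA yA.
by move/negP: bN; apply; apply/memnb; split=> //; exists a.
Qed.

Definition fz (Z A : {set T}) := #|nbh e A :\: Z|.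

Lemma fz_sub (Z A B : {set T}) : fz Z (A :|: B) + fz Z (A :&: B) <= fz Z A + fz Z B.
Proof.
rewrite /fz -cardsUI -[#|nbh e A :\: Z| + _]cardsUI.
apply: leq_add; apply: subset_leq_card; apply/subsetP=> w;
  rewrite ?(in_setU, in_setI, in_setD).
- case/orP=> /andP[wZ /memnb[wAB [x xAB exw]]]; rewrite wZ /=.
    move: wAB xAB; rewrite !in_setU negb_or => /andP[wA wB] /orP[xA|xB].
      by apply/orP; left; apply/memnb; split=> //; exists x.
    by apply/orP; right; apply/memnb; split=> //; exists x.
  move: wAB xAB; rewrite !in_setI negb_and => wAB /andP[xA xB].
  case/orP: wAB => [wA|wB].
    by apply/orP; left; apply/memnb; split=> //; exists x.
  by apply/orP; right; apply/memnb; split=> //; exists x.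
- case/andP=> /andP[wZ /memnb[wAB _]] /andP[_ /memnb[_ [x xAB exw]]].
  move: wAB xAB; rewrite in_setU !in_setI negb_or => /andP[wA wB] /andP[xA xB].
  rewrite wZ /=; apply/andP; split; apply/memnb; split=> //; by exists x.
Qed.

Definition reachb (X D : {set T}) :=
  [forall y in D, [exists x in X, connect (induced e D) x y]].

Lemma reachbP (X D : {set T}) : reflect (forall y, y \in D -> exists2 x, x \in X & connect (induced e D) x y)
  (reachb X D).
Proof.
apply: (iffP forall_inP) => H y /H.
  by case/exists_inP=> x ??; exists x.
by case=> x ??; apply/exists_inP; exists x.
Qed.

Lemma reachbU (X A B : {set T}) : reachb X A -> reachb X B -> reachb X (A :|: B).
Proof.
move=> /reachbP rA /reachbP rB; apply/reachbP=> y; rewrite inE => /orP[/rA|/rB] [x xX c];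
  exists x => //; apply: conn_mono c; [exact: subsetUl | exact: subsetUr].
Qed.

Lemma reachbW (X X' D : {set T}) : X \subset X' -> reachb X D -> reachb X' D.
Proof.
move=> sX /reachbP rD; apply/reachbP=> y /rD [x xX c]; exists x => //.
exact: (subsetP sX).
Qed.

Definition Rp (X I : {set T}) := [set y in I | [exists x in X, connect (induced e I) x y]].

Lemma Rp_props (X I Z : {set T}) : X \subset I ->
  [/\ X \subset Rp X I, reachb X (Rp X I), Rp X I \subset I & fz Z (Rp X I) <= fz Z I].
Proof.
move=> sXI.
have sRI : Rp X I \subset I by apply/subsetP=> y; rewrite inE => /andP[].
have XR : X \subset Rp X I.
  apply/subsetP=> x xX; rewrite inE (subsetP sXI) //=; apply/exists_inP.
  by exists x => //; apply: connect0.
split=> //.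
- apply/reachbP=> y; rewrite inE => /andP[yI /exists_inP[x xX c]]; exists x => //.
  have xR := subsetP XR x xX.
  apply/negPn/negP=> ncy.
  have [a [b [/and3P[eab aI bI] ca ncb]]] :=
    exit_edge (P := [pred z | connect (induced e (Rp X I)) x z]) c (connect0 _ _) ncy.
  have aR : a \in Rp X I := conn_in ca xR.
  have bR : b \in Rp X I.
    rewrite inE bI /=; apply/exists_inP; exists x => //.
    apply: connect_trans (conn_mono sRI ca) (connect1 _).
    by rewrite /induced eab aI bI.
  move/negP: ncb; apply; apply: connect_trans ca (connect1 _).
  by rewrite /= /induced eab aR bR.
- rewrite /fz; apply: subset_leq_card; apply/subsetP=> w; rewrite !in_setD.
  case/andP=> wZ /memnb[wR [x xR exw]]; rewrite wZ /=; apply/memnb; split; last first.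
    by exists x => //; exact: (subsetP sRI).
  apply/negP=> wI; move/negP: wR; apply; rewrite inE wI /=.
  move: xR; rewrite inE => /andP[xI /exists_inP[x0 x0X c]].
  apply/exists_inP; exists x0 => //; apply: connect_trans c (connect1 _).
  by rewrite /induced exw xI wI.
Qed.


Definition good (U Z X : {set T}) (K : nat) (D : {set T}) :=
  [&& X \subset D, D \subset U, reachb X D, fz Z D <= K &
      [forall A : {set T}, [&& X \subset A, reachb X A, D \proper A & A \subset U]
         ==> (fz Z D < fz Z A)]].

Definition cnt_hyp (m : nat) (U Z X : {set T}) (K : nat) :=
  forall A : {set T}, X \subset A -> reachb X A -> A \subset U -> 2 * K <= m + fz Z A.

Lemma fz_split (Z D : {set T}) u : u \in nbh e D -> u \notin Z ->
  fz Z D = (fz (u |: Z) D).+1.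
Proof.
move=> uN uZ; rewrite /fz (cardsD1 u) in_setD uZ uN /= add1n.
by rewrite setDDl setUC.
Qed.

Lemma fz_le (Z D : {set T}) u : fz Z D <= (fz (u |: Z) D).+1.
Proof.
rewrite /fz (cardsD1 u (nbh e D :\: Z)) setDDl setUC.
by case: (u \in _).
Qed.

Lemma reach_ext (X M A : {set T}) x u : X \subset M -> reachb X M -> M \subset A ->
  x \in M -> e x u -> u \in A -> reachb (u |: M) A -> reachb X A.
Proof.
move=> sXM /reachbP rM sMA xM exu uA /reachbP rA; apply/reachbP=> y /rA [z].
rewrite in_setU1 => /orP[/eqP->|zM] c.
  have [x0 x0X c0] := rM x xM; exists x0 => //.
  apply: connect_trans (conn_mono sMA c0) (connect_trans (connect1 _) c).
  by rewrite /induced exu (subsetP sMA).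
have [x0 x0X c0] := rM z zM; exists x0 => //.
exact: connect_trans (conn_mono sMA c0) c.
Qed.

Lemma count_gen m :
  (forall m', m' < m -> forall (U Z X : {set T}) K, [disjoint U & Z] -> cnt_hyp m' U Z X K ->
      #|[set D | good U Z X K D]| <= 2 ^ m') ->
  forall (U Z X : {set T}) K, [disjoint U & Z] -> cnt_hyp m U Z X K ->
      #|[set D | good U Z X K D]| <= 2 ^ m.
Proof.
move=> IH U Z X K dUZ hyp.
case: (set_0Vmem [set D | good U Z X K D]) => [->|[D0]]; first by rewrite cards0.
rewrite inE => /and5P[sXD0 sD0U rD0 fD0 _].
pose P (A : {set T}) := [&& X \subset A, reachb X A & A \subset U].
have exl : exists l, [exists A, P A && (fz Z A == l)].
  by exists (fz Z D0); apply/existsP; exists D0; rewrite /P sXD0 rD0 sD0U eqxx.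
case: (ex_minnP exl) => lam /existsP[A0 /andP[PA0 /eqP fA0]] minl.
have hmin (A : {set T}) : P A -> lam <= fz Z A.
  by move=> PA; apply: minl; apply/existsP; exists A; rewrite PA eqxx.
have exc : exists c, [exists A, [&& P A, fz Z A == lam & #|A| == c]].
  by exists #|A0|; apply/existsP; exists A0; rewrite PA0 fA0 !eqxx.
have ubc c : [exists A, [&& P A, fz Z A == lam & #|A| == c]] -> c <= #|T|.
  by case/existsP=> A /and3P[_ _ /eqP<-]; apply: max_card.
case: (ex_maxnP exc ubc) => cc /existsP[M /and3P[PM /eqP fM /eqP cM]] maxc.
move: (PM) => /and3P[sXM rM sMU].
have union_le (B : {set T}) : P B -> fz Z (B :|: M) <= fz Z B.
  case/and3P=> sXB rB sBU.
  have sXI : X \subset B :&: M by rewrite subsetI sXB sXM.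
  have [XR rR sRI fR] := Rp_props Z sXI.
  have PR : P (Rp X (B :&: M)).
    by rewrite /P XR rR (subset_trans sRI (subset_trans (subsetIl _ _) sBU)).
  have h1 := hmin _ PR; have h2 := fz_sub Z B M; rewrite fM in h2.
  exact: ar1 h1 fR h2.
have PU (B : {set T}) : P B -> P (B :|: M).
  case/and3P=> sXB rB sBU.
  by rewrite /P (subset_trans sXB (subsetUl _ _)) reachbU //= subUset sBU.
have key (B : {set T}) : P B -> fz Z B <= lam -> B \subset M.
  move=> PB fB.
  have fU : fz Z (B :|: M) = lam.
    by apply/eqP; rewrite eqn_leq (leq_trans (union_le _ PB) fB) hmin ?PU.
  have cU : #|B :|: M| <= cc.
    by apply: maxc; apply/existsP; exists (B :|: M); rewrite PU ?fU ?eqxx.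
  have : M \subset B :|: M by apply: subsetUr.
  move/subset_leqif_card => [_]; rewrite cM eqn_leq cU /=.
  rewrite -cM (subset_leq_card (subsetUr _ _)) => /esym H.
  by apply: subset_trans (subsetUl B M) H.
have MD (D : {set T}) : good U Z X K D -> M \subset D.
  case/and5P=> sXD sDU rD fD /forallP imp.
  have PD : P D by rewrite /P sXD rD sDU.
  have := imp (D :|: M); rewrite (subset_trans sXD (subsetUl _ _)) reachbU //=.
  rewrite subUset sDU sMU properE subsetUl /= => H.
  case: (boolP (D :|: M \subset D)) => [|nsub]; first by rewrite subUset => /andP[].
  have h1 := implyP H; rewrite nsub in h1; have h2 := union_le _ PD; have {}h1 := h1 isT.
  by rewrite ltnNge h2 in h1.
have dU : forall y, y \in U -> y \notin Z.
  by move: dUZ; rewrite disjoints_subset => /subsetP H y /H; rewrite inE.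
case: (boolP [exists u, [&& u \in U, u \notin M, u \notin Z & u \in nbh e M]])
  => [/existsP[u /and4P[uU uM uZ uN]] | none]; last first.
  apply: (@leq_trans #|[set M]|); last by rewrite cards1 expn_gt0.
  apply: subset_leq_card; apply/subsetP=> D; rewrite inE => gD; rewrite inE.
  have sMD := MD _ gD; move: gD => /and5P[sXD sDU /reachbP rD _ _].
  rewrite eqEsubset sMD andbT; apply/subsetP=> y yD; have [x xX c] := rD y yD.
  apply/negPn/negP => yM.
  have [a [b [/and3P[eab aD bD] aM bM]]] :=
    exit_edge (P := [pred z | z \in M]) c (subsetP sXM x xX) yM.
  have bU := subsetP sDU b bD.
  move/negP: none; apply; apply/existsP; exists b; rewrite bU bM dU //=.
  by apply/memnb; split=> //; exists a.
have [x xM exu] : exists2 x, x \in M & e x u by case/memnb: uN.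
have lam1 : 1 <= lam.
  by rewrite -fM /fz card_gt0; apply/set0Pn; exists u; rewrite in_setD uZ uN.
have lamK : lam <= K by apply: leq_trans (hmin _ _) fD0; rewrite /P sXD0 rD0 sD0U.
have hM := hyp M sXM rM sMU; rewrite fM in hM.
case: m IH hyp hM => [|m'] IH hyp hM.
  by case: (ar2 lam1 lamK hM).
have hyp1 : cnt_hyp m' U Z (u |: M) K.
  move=> A sA rA sAU.
  have sMA : M \subset A by apply: subset_trans (subsetUr _ _) sA.
  have uA : u \in A by apply: (subsetP sA); apply: setU11.
  have rXA := reach_ext sXM rM sMA xM exu uA rA.
  have PA : P A by rewrite /P (subset_trans sXM sMA) rXA sAU.
  have lt : lam < fz Z A.
    rewrite ltnNge; apply/negP => fA; move/negP: uM; apply.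
    exact: (subsetP (key _ PA fA)).
  exact: ar3 lt hM.
have hyp2 : cnt_hyp m' (U :\ u) (u |: Z) X K.-1.
  move=> A sXA rA sAU2.
  have sAU : A \subset U by apply: subset_trans sAU2 (subD1set _ _).
  have h1 := hyp A sXA rA sAU; have h2 := fz_le Z A u.
  exact: ar4 h1 h2.
have dUZ2 : [disjoint U :\ u & u |: Z].
  rewrite disjoints_subset; apply/subsetP=> y; rewrite in_setD1 in_setC in_setU1.
  by case/andP=> yu yU; rewrite negb_or yu dU.
apply: (@leq_trans #|[set D | good U Z (u |: M) K D] :|: [set D | good (U :\ u) (u |: Z) X K.-1 D]|).
  apply: subset_leq_card; apply/subsetP=> D; rewrite inE => gD.
  have sMD := MD D gD.
  move: gD => /and5P[sXD sDU rD fD /forallP imp].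
  have rXA (A : {set T}) : D \subset A -> u \in A -> reachb (u |: M) A -> reachb X A.
    move=> sDA uA; apply: reach_ext sXM rM (subset_trans sMD sDA) xM exu uA.
  case: (boolP (u \in D)) => uD; apply/setUP; [left|right]; rewrite inE.
    apply/and5P; split=> //.
    - by rewrite subUset sub1set uD sMD.
    - by apply: reachbW rD; apply: subset_trans sXM (subsetUr _ _).
    apply/forallP => A; apply/implyP => /and4P[sA rA pDA sAU].
    apply: (implyP (imp A)).
    move: (pDA); rewrite properE => /andP[sDA _].
    have uA : u \in A by apply: (subsetP sDA).
    rewrite (subset_trans sXM (subset_trans (subsetUr _ _) sA)) (rXA A sDA uA rA) /=. by rewrite -properE pDA.
  have uND : u \in nbh e D by apply/memnb; split=> //; exists x => //; apply: (subsetP sMD).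
  have fs := fz_split uND uZ.
  apply/and5P; split=> //.
  - apply/subsetP=> y yD; rewrite in_setD1 (subsetP sDU) // andbT.
    by apply/eqP => yu; move: uD; rewrite -yu yD.
  - exact: ar5 fD fs.
  apply/forallP => A; apply/implyP => /and4P[sA rA pDA sAU2].
  have sAU : A \subset U by apply: subset_trans sAU2 (subD1set _ _).
  have h := implyP (imp A); rewrite sA rA pDA sAU in h.
  have h1 := h isT; have h2 := fz_le Z A u.
  exact: ar6 h1 h2 fs.
apply: leq_trans (leq_card_setU _ _).1 _.
rewrite expnS mul2n -addnn; apply: leq_add; apply: IH => //.
Qed.

Lemma count_good n : forall (U Z X : {set T}) K, [disjoint U & Z] -> cnt_hyp n U Z X K ->
  #|[set D | good U Z X K D]| <= 2 ^ n.
Proof.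
elim: n {-2}n (leqnn n) => [|N IHN] n le.
  by move: le; rewrite leqn0 => /eqP->; apply: count_gen => m'; rewrite ltn0.
apply: count_gen => m' lt; apply: IHN; by rewrite -ltnS (leq_trans lt le).
Qed.

Lemma reach_nbh (D B : {set T}) v : v \in D -> D \subset B -> reachb [set v] B ->
  reach e (nbh e B) D = B.
Proof.
move=> vD sDB /reachbP rB; apply/setP=> y; rewrite /reach inE; apply/idP/idP.
  case/andP=> _ /exists_inP[x]; rewrite in_setD => /andP[_ xD] c.
  exact: closure_avoid c (subsetP sDB x xD).
move=> yB; apply/andP; split; first by apply/negP => /nbh_out; rewrite yB.
apply/exists_inP; exists v.
  rewrite in_setD vD andbT; apply/negP => /nbh_out; by rewrite (subsetP sDB v vD).
have [x0 x0v c] := rB y yB; move: x0v; rewrite inE => /eqP xv; rewrite -xv.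
move: c; apply: connect_sub => a b /and3P[eab aB bB]; apply: connect1.
have nA : a \notin nbh e B by apply/negP => /nbh_out; rewrite aB.
have nB : b \notin nbh e B by apply/negP => /nbh_out; rewrite bB.
by rewrite /avoid eab nA nB.
Qed.

Lemma maxchip_good S k (D : {set T}) v : max_chip e S k D -> v \in D ->
  good (~: S) set0 [set v] (3 * k) D.
Proof.
case/andP=> /and3P[/andP[_ /forall_inP cD] nk imp] _ vD.
have rD : reachb [set v] D.
  apply/reachbP=> y yD; exists v; first by rewrite inE.
  by move: (cD v vD) => /forall_inP H; exact: H y yD.
move: imp => /andP[/andP[sep _] /forallP impf].
have sDS : D \subset ~: S.
  apply/subsetP=> y yD; rewrite inE; apply/negP=> yS.
  have yN : y \notin nbh e D by apply/negP => /nbh_out; rewrite yD.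
  move/forall_inP: sep => /(_ y); rewrite in_setD yN yD => /(_ isT) /forall_inP /(_ y).
  by rewrite in_setD yN yS connect0 => /(_ isT).
rewrite /good sub1set vD sDS rD /fz setD0 nk /=.
apply/forallP=> A; apply/implyP=> /and4P[sVA rA pDA sAS].
rewrite setD0 ltnNge; apply/negP => le.
have sDA : D \subset A by move: pDA; rewrite properE => /andP[].
have sep' : separator e D S (nbh e A).
  apply/forall_inP => x; rewrite in_setD => /andP[_ xD]; apply/forall_inP => y.
  rewrite in_setD => /andP[_ yS]; apply/negP => c.
  have := closure_avoid c (subsetP sDA x xD).
  by move/(subsetP sAS); rewrite inE yS.
move: (impf (nbh e A)); rewrite sep' le /= => /negP; apply.
by rewrite (reach_nbh vD (subxx D) rD) (reach_nbh vD sDA rA).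
Qed.

Lemma touch_nbh S k (C D : {set T}) : max_chip e S k C -> max_chip e S k D -> touch e C D ->
  exists2 v, v \in nbh e C & v \in D.
Proof.
move=> mC mD /andP[neq tc].
have case1 x : x \in C -> x \in D -> exists2 v, v \in nbh e C & v \in D.
  move=> xC xD.
  have nsub : ~~ (D \subset C).
    apply/negP=> sDC; move: mD => /andP[_ /forallP /(_ C)].
    rewrite (andP mC).1 sDC /= => /eqP CD; by rewrite CD eqxx in neq.
  case/subsetPn: nsub => z zD zC.
  move: mD => /andP[/and3P[/andP[_ /forall_inP cD] _ _] _].
  have c := forall_inP (cD x xD) z zD.
  have [a [b [/and3P[eab aD bD] aC bC]]] := exit_edge (P := [pred w | w \in C]) c xC zC.
  by exists b => //; apply/memnb; split => //; exists a.
case/orP: tc => [/exists_inP[x xC xD]|/exists_inP[x xC /exists_inP[y yD exy]]].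
  exact: case1 xC xD.
case: (boolP (y \in C)) => yC; first exact: case1 yC yD.
by exists y => //; apply/memnb; split=> //; exists x.
Qed.

End Gen.

Lemma card_bigcup_le (I T : finType) (P : pred I) (F : I -> {set T}) :
  #|\bigcup_(i | P i) F i| <= \sum_(i | P i) #|F i|.
Proof.
elim/big_rec2: _ => [|i s U _ IH]; first by rewrite cards0.
by apply: leq_trans (leq_card_setU _ _).1 _; rewrite leq_add2l.
Qed.

Unset Implicit Arguments.

Theorem lemma3p7 (T : finType) (e : rel T) (e_sym : symmetric e) (e_irr : irreflexive e)
  (S : {set T}) (k : nat) (C : {set T}) :
  max_chip e S k C ->
  #|[set D : {set T} | max_chip e S k D & touch e C D]| <= 3 * k * 4 ^ (3 * k).
Proof.
move=> mC.
pose F := fun v => [set D : {set T} | max_chip e S k D & v \in D].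
have sub : [set D | max_chip e S k D & touch e C D] \subset \bigcup_(v in nbh e C) F v.
  apply/subsetP=> D; rewrite inE => /andP[mD tD]; have [v vN vD] := touch_nbh mC mD tD.
  by apply/bigcupP; exists v => //; rewrite inE mD vD.
have cardF v : #|F v| <= 4 ^ (3 * k).
  apply: (@leq_trans #|[set D | good e (~: S) set0 [set v] (3 * k) D]|).
    apply: subset_leq_card; apply/subsetP=> D; rewrite !inE => /andP[mD vD].
    exact: maxchip_good mD vD.
  rewrite (_ : 4 = 2 ^ 2) // -expnM; apply: count_good.
    by rewrite disjoints_subset setC0 subsetT.
  by move=> A _ _ _; exact: leq_addr.
apply: leq_trans (subset_leq_card sub) _.
apply: leq_trans (card_bigcup_le _ _) _.
apply: (@leq_trans (\sum_(v in nbh e C) 4 ^ (3 * k))); first by apply: leq_sum => v _; exact: cardF.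
rewrite sum_nat_const; apply: leq_mul => //.
by case/andP: mC => /and3P[].
Qed.
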